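(* Let $G$ and $H$ be nontrivial finite, simple, connected graphs. Then (i) $\gamma_P(G\circ H)=1$ if and only if $\gamma(G)=1$ and $\gamma_P(H)=1$; (ii) $\gamma_P(G\circ H)=2$ if and only if either $\gamma(G)=2$ and $\gamma_P(H)=1$, or $\mathrm{diam}(\overline{G})>2$ and $\gamma_P(H)>1$.
   Context: The lexicographic product $G\circ H$ has vertex set $V(G)\times V(H)$, with $(g,h)$ adjacent to $(g',h')$ iff $gg'\in E(G)$, or $g=g'$ and $hh'\in E(H)$. $\overline{G}$ is the complement of $G$ (its diameter is infinite if it is disconnected). $\gamma(G)$ is the domination number. For $U\subseteq V(G)$, $cl(U)$ is obtained by coloring $U$ black and repeatedly applying: if a black vertex has exactly one white neighbor, that neighbor becomes black. $S$ is a power dominating set if $cl(N[S])=V(G)$; $\gamma_P$ is the minimum size of a power dominating set. *)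

(* Defs.v *)
From mathcomp Require Import all_boot.
Set Implicit Arguments. Unset Strict Implicit. Unset Printing Implicit Defensive.

Section Graphs.
Variable T : finType.
Variable e : rel T.

Definition simple_graph := symmetric e /\ irreflexive e.
Definition connected_graph := forall x y : T, connect e x y.
Definition nontrivial_graph := 1 < #|T|.

Definition closed_nbhd (S : {set T}) : {set T} :=
  [set w | (w \in S) || [exists v in S, e v w]].

Definition dominating (S : {set T}) := closed_nbhd S == [set: T].

(* domination number: minimum size of a dominating set (V itself dominates) *)
Definition domination_number : nat :=
  \big[minn/#|T|]_(S : {set T} | dominating S) #|S|.

(* one round of the propagation rule, applied at all black vertices at once:
   if a black vertex v has exactly one white neighbour w, w becomes black *)
Definition prop_step (B : {set T}) : {set T} :=
  B :|: [set w | [exists v in B,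
          [&& e v w, w \notin B &
              [forall u, (e v u && (u \notin B)) ==> (u == w)]]]].

(* cl(U): repeat until stable; #|T| rounds suffice *)
Definition closure_pd (U : {set T}) : {set T} := iter #|T| prop_step U.

Definition power_dominating (S : {set T}) := closure_pd (closed_nbhd S) == [set: T].

Definition power_domination_number : nat :=
  \big[minn/#|T|]_(S : {set T} | power_dominating S) #|S|.

Definition compl_rel : rel T := fun x y => (x != y) && ~~ e x y.

(* diam(complement G) > 2 (including the case of infinite diameter, i.e.
   complement disconnected): some pair of vertices is at distance > 2
   in the complement, i.e. not joined by a walk of length <= 2. *)
Definition compl_diam_gt2 : Prop :=
  exists x y : T, [/\ x != y, ~~ compl_rel x y &
                      ~~ [exists z, compl_rel x z && compl_rel z y]].
End Graphs.

Definition lex_rel (T1 T2 : finType) (e1 : rel T1) (e2 : rel T2) : rel (T1 * T2) :=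
  fun p q => e1 p.1 q.1 || ((p.1 == q.1) && e2 p.2 q.2).

(* Main.v *)
Require Import Defs.
From mathcomp Require Import all_boot.
Set Implicit Arguments. Unset Strict Implicit. Unset Printing Implicit Defensive.

Lemma bigmin_seq_le (I : eqType) (r : seq I) (P : pred I) (F : I -> nat) d i :
  i \in r -> P i -> \big[minn/d]_(j <- r | P j) F j <= F i.
Proof.
elim: r => // a r IH; rewrite inE big_cons => /orP[/eqP <- Pi|ir Pi].
  by rewrite Pi geq_minl.
case: (P a); last exact: IH.
exact: leq_trans (geq_minr _ _) (IH ir Pi).
Qed.

Lemma num_spec (T : finType) (p : pred {set T}) n :
  p setT ->
  (\big[minn/#|T|]_(S | p S) #|S| = n <->
   (exists S, p S /\ #|S| = n) /\ (forall S, p S -> n <= #|S|)).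
Proof.
move=> pT; split.
- move=> <-; split.
  + apply: (big_ind (fun m => exists S, p S /\ #|S| = m)).
    * by exists setT; rewrite cardsT.
    * move=> x y [S [pS <-]] [S' [pS' <-]].
      case: (leqP #|S| #|S'|) => h.
      - by exists S; split => //; apply/esym/minn_idPl.
      - by exists S'; split => //; apply/esym/minn_idPr/ltnW.
    * by move=> S pS; exists S.
  + move=> S pS; apply: bigmin_seq_le => //; exact: mem_index_enum.
- move=> [[S [pS <-]] H]; apply/eqP; rewrite eqn_leq; apply/andP; split.
  + apply: bigmin_seq_le => //; exact: mem_index_enum.
  + apply: (big_ind (fun m => #|S| <= m)).
    * by rewrite -cardsT; exact: H.
    * by move=> x y hx hy; rewrite leq_min hx hy.
    * by move=> i /H.
Qed.

Definition stalled (T : finType) (e : rel T) (X : {set T}) :=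
  forall v w, v \in X -> w \notin X -> e v w ->
    exists u, [/\ u \notin X, e v u & u != w].

Lemma stalled_fixed (T : finType) (e : rel T) (X : {set T}) :
  stalled e X -> prop_step e X = X.
Proof.
move=> st; apply/setP=> x; rewrite /prop_step !inE.
case xX: (x \in X) => //=.
apply/negbTE/existsP=> -[v /and3P[vX evx /forallP fa]].
have [u [uX evu uw]] := st v x vX (negbT xX) evx.
by move: (fa u); rewrite evu uX /= (negbTE uw).
Qed.

Lemma fixed_stalled (T : finType) (e : rel T) (X : {set T}) :
  prop_step e X = X -> stalled e X.
Proof.
move=> fx v w vX wX evw.
case: (boolP [exists u, [&& u \notin X, e v u & u != w]]).
  by move=> /existsP[u /and3P[a b c]]; exists u.
move=> /existsPn nu.
have: w \in prop_step e X.
  rewrite /prop_step !inE; apply/orP; right; apply/existsP; exists v.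
  rewrite vX evw wX /=; apply/forallP => u; apply/implyP => /andP[evu uX].
  by move: (nu u); rewrite uX evu /= negbK.
by rewrite fx (negbTE wX).
Qed.

Lemma prop_step_mono (T : finType) (e : rel T) (X Y : {set T}) :
  X \subset Y -> prop_step e X \subset prop_step e Y.
Proof.
move=> sXY; apply/subsetP=> x; rewrite /prop_step !inE.
case/orP=> [xX|]; first by rewrite (subsetP sXY x xX).
case/existsP=> v /andP[vX /and3P[evx xX /forallP fa]].
case xY: (x \in Y) => //=.
apply/existsP; exists v; rewrite (subsetP sXY v vX) evx /=.
apply/forallP=> u; apply/implyP=> /andP[evu uY].
apply: (implyP (fa u)); rewrite evu /=.
by apply/negP=> uX; move: uY; rewrite (subsetP sXY u uX).
Qed.

Lemma closure_least (T : finType) (e : rel T) (U X : {set T}) :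
  U \subset X -> stalled e X -> closure_pd e U \subset X.
Proof.
move=> sUX /stalled_fixed fx; rewrite /closure_pd.
elim: #|T| => //= n IH.
by rewrite -fx; apply: prop_step_mono.
Qed.

Lemma closure_sup (T : finType) (e : rel T) (U : {set T}) : U \subset closure_pd e U.
Proof.
rewrite /closure_pd; elim: #|T| => //= n IH.
apply: (subset_trans IH); exact: subsetUl.
Qed.

Lemma iter_fix (T : finType) (e : rel T) (U : {set T}) k :
  k <= #|iter k (prop_step e) U| \/
  prop_step e (iter k (prop_step e) U) = iter k (prop_step e) U.
Proof.
elim: k => [|k [IH|IH]] /=; first by left.
- case: (eqVneq (prop_step e (iter k (prop_step e) U)) (iter k (prop_step e) U)) => h.
    by right; rewrite !h.
  left; apply: (leq_ltn_trans IH); apply: proper_card.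
  by rewrite properEneq eq_sym h subsetUl.
- by right; rewrite !IH.
Qed.

Lemma closure_stalled (T : finType) (e : rel T) (U : {set T}) : stalled e (closure_pd e U).
Proof.
apply: fixed_stalled; rewrite /closure_pd.
case: (iter_fix e U #|T|) => // h.
have ->: iter #|T| (prop_step e) U = setT.
  by apply/eqP; rewrite eqEcard subsetT cardsT h.
by rewrite /prop_step setTU.
Qed.

Lemma pd_iff (T : finType) (e : rel T) (S : {set T}) :
  power_dominating e S <->
  (forall X : {set T}, closed_nbhd e S \subset X -> stalled e X -> X = setT).
Proof.
split.
- move=> /eqP pd X sX st; apply/eqP; rewrite eqEsubset subsetT /= -pd.
  exact: closure_least.
- move=> H; apply/eqP; apply: H; [exact: closure_sup | exact: closure_stalled].
Qed.

Lemma cnP (T : finType) (e : rel T) (S : {set T}) w :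
  (w \in closed_nbhd e S) = (w \in S) || [exists v in S, e v w].
Proof. by rewrite inE. Qed.

Lemma other_elt (T : finType) (x : T) : 1 < #|T| -> exists y, y != x.
Proof.
move=> h; have: 0 < #|[set~ x]| by rewrite cardsC1 -ltnS prednK // (ltn_trans _ h).
by case/card_gt0P => y; rewrite !inE => ?; exists y.
Qed.

Lemma crossing (T : finType) (e : rel T) (A : {set T}) x y :
  x \in A -> connect e x y -> y \notin A ->
  exists u v, [/\ u \in A, v \notin A & e u v].
Proof.
move=> xA /connectP[p pth ->]; elim: p x xA pth => [|a p IH] x xA /=.
  by move=> _; rewrite xA.
case/andP=> exa pth; case aA: (a \in A).
  exact: IH.
by move=> _; exists x, a; rewrite aA.
Qed.

Lemma two_whites (T : finType) (e : rel T) (Y : {set T}) y :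
  connected_graph e -> 1 < #|T| -> stalled e Y -> y \notin Y ->
  exists y', y' \notin Y /\ y' != y.
Proof.
move=> conn nt st yY.
case: (boolP [exists y', (y' \notin Y) && (y' != y)]).
  by case/existsP=> y' /andP[a b]; exists y'.
move/existsPn=> H.
case: (set_0Vmem Y) => [Y0|[x xY]].
  have [y' y'y] := other_elt y nt; exists y'; by rewrite Y0 inE.
have [u [v [uY vY euv]]] := crossing xY (conn x y) yY.
have vy : v = y by move: (H v); rewrite vY /= negbK => /eqP.
have [u' [u'Y _ u'y]] := st u v uY vY euv.
by move: (H u'); rewrite u'Y /= -vy u'y.
Qed.

Lemma closure_notpd (T : finType) (e : rel T) (S : {set T}) :
  ~~ power_dominating e S ->
  exists Y : {set T}, [/\ closed_nbhd e S \subset Y, stalled e Y & Y != setT].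
Proof.
move=> npd; exists (closure_pd e (closed_nbhd e S)); split => //.
- exact: closure_sup.
- exact: closure_stalled.
Qed.

Lemma set0_not_pd (T : finType) (e : rel T) (x : T) : ~~ power_dominating e set0.
Proof.
apply/negP; move/pd_iff=> H.
have : (set0 : {set T}) = setT.
  apply: H; last by move=> v w; rewrite inE.
  by apply/subsetP=> w; rewrite cnP !inE; case/existsP=> v; rewrite inE.
by move/setP/(_ x); rewrite !inE.
Qed.

Lemma setT_pd (T : finType) (e : rel T) : power_dominating e setT.
Proof.
apply/pd_iff=> X sX _; apply/eqP; rewrite eqEsubset subsetT /=.
apply: subset_trans sX; apply/subsetP=> w _; by rewrite cnP inE.
Qed.

Lemma set0_not_dom (T : finType) (e : rel T) (x : T) : ~~ dominating e set0.
Proof.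
apply/negP=> /eqP /setP /(_ x); rewrite cnP !inE.
by move=> /existsP[v]; rewrite inE.
Qed.

Lemma setT_dom (T : finType) (e : rel T) : dominating e setT.
Proof. by apply/eqP/setP=> w; rewrite cnP !inE. Qed.

Lemma num1 (T : finType) (p : pred {set T}) :
  p setT -> ~~ p set0 ->
  (\big[minn/#|T|]_(S | p S) #|S| = 1 <-> exists x, p [set x]).
Proof.
move=> pT p0; split.
- by move/(num_spec 1 pT)=> [[S [pS /eqP/cards1P [x Sx]]] _]; exists x; rewrite -Sx.
- case=> x px; apply/(num_spec 1 pT); split; first by exists [set x]; rewrite cards1.
  move=> S pS; rewrite card_gt0; apply/negP=> /eqP S0; move: pS.
  by rewrite S0 (negbTE p0).
Qed.

Lemma num_ge1 (T : finType) (p : pred {set T}) :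
  p setT -> ~~ p set0 -> 1 <= \big[minn/#|T|]_(S | p S) #|S|.
Proof.
move=> pT p0; have [[S [pS <-]] _] := proj1 (num_spec (\big[minn/#|T|]_(S | p S) #|S|) pT) erefl.
rewrite card_gt0; apply/negP=> /eqP S0; move: pS.
by rewrite S0 (negbTE p0).
Qed.

Lemma num_gt1 (T : finType) (p : pred {set T}) :
  p setT -> ~~ p set0 ->
  (1 < \big[minn/#|T|]_(S | p S) #|S| <-> forall x, ~~ p [set x]).
Proof.
move=> pT p0; have h1 := num_ge1 pT p0; split.
- move=> h x; apply/negP=> px.
  have : \big[minn/#|T|]_(S | p S) #|S| = 1 by apply/num1 => //; exists x.
  by move=> e; rewrite e in h.
- move=> H; rewrite ltn_neqAle h1 andbT; apply/negP=> /eqP/esym/num1.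
  by case=> // x; rewrite (negbTE (H x)).
Qed.

Lemma num2 (T : finType) (p : pred {set T}) :
  p setT -> ~~ p set0 ->
  (\big[minn/#|T|]_(S | p S) #|S| = 2 <->
   (exists x y, x != y /\ p [set x; y]) /\ (forall x, ~~ p [set x])).
Proof.
move=> pT p0; split.
- move=> h; split; last by apply/num_gt1 => //; rewrite h.
  have [[S [pS /eqP/cards2P [x [y [xy Sxy]]]]] _] := proj1 (num_spec 2 pT) h.
  by exists x, y; rewrite -Sxy.
- case=> [[x [y [xy pxy]]] H]; apply/(num_spec 2 pT); split.
    by exists [set x; y]; rewrite cards2 xy.
  move=> S pS; rewrite ltnNge; apply/negP=> hS.
  move: hS; rewrite leq_eqVlt ltnS leqn0 => /orP[/cards1P [z Sz]|/eqP/cards0_eq S0].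
    by move: pS; rewrite Sz (negbTE (H z)).
  by move: pS; rewrite S0 (negbTE p0).
Qed.

Lemma lexE (T1 T2 : finType) (e1 : rel T1) (e2 : rel T2) p q :
  lex_rel e1 e2 p q = e1 p.1 q.1 || ((p.1 == q.1) && e2 p.2 q.2).
Proof. by []. Qed.

Lemma layer_stalled (T1 T2 : finType) (e1 : rel T1) (e2 : rel T2)
  (X : {set T1 * T2}) g :
  irreflexive e1 -> stalled (lex_rel e1 e2) X ->
  (forall c y, e1 g c -> (c, y) \in X) -> stalled e2 [set y | (g, y) \in X].
Proof.
move=> irr st full v w; rewrite !inE => vX wX evw.
have ev : lex_rel e1 e2 (g, v) (g, w) by rewrite lexE /= eqxx evw orbT.
have [[u1 u2] [uX evu uw]] := st (g, v) (g, w) vX wX ev.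
move: evu; rewrite lexE /=.
case/orP=> [|/andP[/eqP gu e2u]]; first by move=> /(full _ u2); rewrite (negbTE uX).
subst u1; exists u2; split => //; first by rewrite inE.
by apply: contraNneq uw => ->.
Qed.

Lemma A1 (T1 T2 : finType) (e1 : rel T1) (e2 : rel T2) (S : {set T1 * T2}) c :
  1 < #|T2| ->
  (forall s, s \in S -> (s.1 != c) && ~~ e1 s.1 c) ->
  ~~ power_dominating (lex_rel e1 e2) S.
Proof.
move=> nt2 Hc; apply/negP=> /pd_iff H.
pose X := [set p : T1 * T2 | [exists s in S, (s.1 == p.1) || e1 s.1 p.1]].
case/card_gt0P: (ltnW nt2) => y0 _.
have : X = setT.
  apply: H.
  - apply/subsetP=> p; rewrite cnP inE.
    case/orP=> [pS|/existsP[s /andP[sS]]].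
      by apply/existsP; exists p; rewrite pS eqxx.
    rewrite lexE => /orP[e|/andP[/eqP ep _]]; apply/existsP; exists s.
      by rewrite sS e orbT.
    by rewrite sS ep eqxx.
  - move=> v w vX wX; rewrite lexE => /orP[e|/andP[/eqP vw _]]; last first.
      by move: wX vX; rewrite !inE vw => /negbTE ->.
    have [y' y'w] := other_elt w.2 nt2.
    exists (w.1, y'); split.
    + by move: wX; rewrite !inE.
    + by rewrite lexE e.
    + by apply: contraNneq y'w => <-.
move/setP/(_ (c, y0)); rewrite !inE => /existsP[s /andP[sS]] /=.
by case/andP: (Hc s sS) => /negbTE -> /negbTE ->.
Qed.

Lemma notT_ex (T : finType) (Y : {set T}) : Y != setT -> exists y, y \notin Y.
Proof. by rewrite -properT => /properP[_ [y _ yY]]; exists y. Qed.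

Lemma A2 (T1 T2 : finType) (e1 : rel T1) (e2 : rel T2) (S : {set T1 * T2}) g
  (Y : {set T2}) :
  connected_graph e2 -> 1 < #|T2| -> stalled e2 Y -> Y != setT ->
  (forall y, (g, y) \in closed_nbhd (lex_rel e1 e2) S -> y \in Y) ->
  ~~ power_dominating (lex_rel e1 e2) S.
Proof.
move=> conn nt2 stY YT HY; apply/negP=> /pd_iff H.
pose X := [set p : T1 * T2 | (p.1 != g) || (p.2 \in Y)].
have [y0 y0Y] := notT_ex YT.
have : X = setT.
  apply: H.
  - apply/subsetP=> -[c y] p; rewrite inE /=.
    case: (eqVneq c g) => [cg|//]; subst c; by rewrite HY.
  - move=> [v1 v2] [w1 w2]; rewrite !inE /= negb_or negbK => vX /andP[/eqP wg w2Y].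
    subst w1; rewrite lexE /= => /orP[e|/andP[/eqP vg e2v]].
      have [y' [y'Y y'w]] := two_whites conn nt2 stY w2Y.
      exists (g, y'); split.
      + by rewrite inE /= eqxx.
      + by rewrite lexE /= e.
      + by apply: contraNneq y'w => -[->].
    subst v1; move: vX; rewrite eqxx /= => v2Y.
    have [u2 [u2Y e2u u2w]] := stY v2 w2 v2Y w2Y e2v.
    exists (g, u2); split.
    + by rewrite inE /= eqxx.
    + by rewrite lexE /= eqxx e2u orbT.
    + by apply: contraNneq u2w => -[->].
by move/setP/(_ (g, y0)); rewrite !inE /= eqxx (negbTE y0Y).
Qed.

Lemma B (T1 T2 : finType) (e1 : rel T1) (e2 : rel T2) (S : {set T1 * T2}) :
  irreflexive e1 ->
  (forall c, (forall y, (c, y) \in closed_nbhd (lex_rel e1 e2) S) \/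
     ((exists h, power_dominating e2 [set h] /\ (c, h) \in S) /\
      (forall c' y, e1 c c' -> (c', y) \in closed_nbhd (lex_rel e1 e2) S))) ->
  power_dominating (lex_rel e1 e2) S.
Proof.
move=> irr HS; apply/pd_iff=> X sX stX.
apply/setP=> [[c y]]; rewrite inE.
case: (HS c) => [full|[[h [pdh chS]] nb]]; first exact: (subsetP sX).
have stY := layer_stalled (g:=c) irr stX (fun c' y' e => subsetP sX _ (nb c' y' e)).
have sY : closed_nbhd e2 [set h] \subset [set y | (c, y) \in X].
  apply/subsetP=> y'; rewrite cnP !inE => /orP[/eqP ->|/existsP[v]].
    by apply: (subsetP sX); rewrite cnP chS.
  rewrite inE => /andP[/eqP -> ehy]; apply: (subsetP sX); rewrite cnP.
  by apply/orP; right; apply/existsP; exists (c, h); rewrite chS lexE /= eqxx ehy orbT.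
have YT := proj1 (pd_iff _ _) pdh _ sY stY.
have : y \in [set y | (c, y) \in X] by rewrite YT inE.
by rewrite inE.
Qed.

Lemma inN (T : finType) (e : rel T) (S : {set T}) p : p \in S -> p \in closed_nbhd e S.
Proof. by rewrite cnP => ->. Qed.

Lemma adjN (T : finType) (e : rel T) (S : {set T}) s p :
  s \in S -> e s p -> p \in closed_nbhd e S.
Proof. by move=> sS esp; rewrite cnP; apply/orP; right; apply/existsP; exists s; rewrite sS. Qed.

Lemma single_pd_inv (T1 T2 : finType) (e1 : rel T1) (e2 : rel T2) g h :
  irreflexive e1 -> connected_graph e2 -> 1 < #|T2| ->
  power_dominating (lex_rel e1 e2) [set (g, h)] ->
  dominating e1 [set g] /\ power_dominating e2 [set h].
Proof.
move=> irr conn nt2 pd; split.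
- apply/eqP/setP=> c; rewrite cnP !inE.
  case: (eqVneq c g) => [//|cg] /=.
  case egc: (e1 g c).
    by apply/existsP; exists g; rewrite inE eqxx egc.
  exfalso; move: pd; apply/negP; apply: (@A1 _ _ _ e2 _ c nt2).
  by move=> s; rewrite inE => /eqP -> /=; rewrite eq_sym cg egc.
- apply/negPn/negP => nph; have [Y [sY stY YT]] := closure_notpd nph.
  move: pd; apply/negP; apply: (@A2 _ _ e1 e2 _ g _ conn nt2 stY YT).
  move=> y; rewrite cnP inE => /orP[/eqP [->]|/existsP[v]].
    by apply: (subsetP sY); apply: inN; rewrite inE.
  rewrite inE => /andP[/eqP -> ]; rewrite lexE /= irr eqxx /= => ehy.
  by apply: (subsetP sY); apply: (adjN (s := h)); rewrite ?inE.
Qed.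

Lemma single_pd (T1 T2 : finType) (e1 : rel T1) (e2 : rel T2) g h :
  irreflexive e1 -> dominating e1 [set g] -> power_dominating e2 [set h] ->
  power_dominating (lex_rel e1 e2) [set (g, h)].
Proof.
move=> irr /eqP/setP dom pdh; apply: B => // c.
case: (eqVneq c g) => [->|cg].
  right; split; first by exists h; rewrite inE.
  by move=> c' y e; apply: (adjN (s := (g, h))); rewrite ?inE // lexE e.
left=> y; have dc := dom c; rewrite cnP !inE (negbTE cg) /= in dc.
case/existsP: dc => v; rewrite inE => /andP[/eqP -> egc].
by apply: (adjN (s := (g, h))); rewrite ?inE // lexE egc.
Qed.

Lemma pair_layer (T1 T2 : finType) (e1 : rel T1) (e2 : rel T2) p q :
  symmetric e1 -> irreflexive e1 -> connected_graph e2 -> 1 < #|T2| ->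
  power_dominating (lex_rel e1 e2) [set p; q] -> p.1 != q.1 -> ~~ e1 p.1 q.1 ->
  power_dominating e2 [set p.2].
Proof.
move=> sym irr conn nt2 pd pq epq.
apply/negPn/negP => nph; have [Y [sY stY YT]] := closure_notpd nph.
move: pd; apply/negP; apply: (@A2 _ _ e1 e2 _ p.1 _ conn nt2 stY YT).
move=> y; rewrite cnP !inE => /orP[/orP[/eqP yp|/eqP yq]|/existsP[v]].
  by apply: (subsetP sY); apply: inN; rewrite inE -yp.
  by move: pq; rewrite -yq eqxx.
rewrite !inE => /andP[/orP[/eqP ->|/eqP ->]]; rewrite lexE /=.
  rewrite irr eqxx /= => ehy.
  by apply: (subsetP sY); apply: (adjN (s := p.2)); rewrite ?inE.
by rewrite sym (negbTE epq) eq_sym (negbTE pq).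
Qed.

Lemma pair_pd (T1 T2 : finType) (e1 : rel T1) (e2 : rel T2) a b h :
  symmetric e1 -> irreflexive e1 ->
  dominating e1 [set a; b] -> power_dominating e2 [set h] ->
  power_dominating (lex_rel e1 e2) [set (a, h); (b, h)].
Proof.
move=> sym irr /eqP/setP dom pdh; apply: B => // c.
case ea: (e1 a c).
  by left=> y; apply: (adjN (s := (a, h))); rewrite ?inE ?eqxx // lexE ea.
case eb: (e1 b c).
  by left=> y; apply: (adjN (s := (b, h))); rewrite ?inE ?eqxx ?orbT // lexE eb.
have dc := dom c; rewrite cnP !inE in dc.
case/orP: dc => [/orP[/eqP ->|/eqP ->]|/existsP[v]].
- right; split; first by exists h; rewrite !inE eqxx.
  by move=> c' y e; apply: (adjN (s := (a, h))); rewrite ?inE ?eqxx // lexE e.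
- right; split; first by exists h; rewrite !inE eqxx orbT.
  by move=> c' y e; apply: (adjN (s := (b, h))); rewrite ?inE ?eqxx ?orbT // lexE e.
- by rewrite !inE => /andP[/orP[/eqP ->|/eqP ->]]; rewrite ?ea ?eb.
Qed.

Lemma edge_pd (T1 T2 : finType) (e1 : rel T1) (e2 : rel T2) x y h :
  symmetric e1 -> irreflexive e1 -> e1 x y ->
  (forall z, [|| z == x, z == y, e1 x z | e1 z y]) ->
  power_dominating (lex_rel e1 e2) [set (x, h); (y, h)].
Proof.
move=> sym irr exy dom; apply: B => // c; left=> z.
case/or4P: (dom c) => [/eqP ->|/eqP ->|e|e].
- by apply: (adjN (s := (y, h))); rewrite ?inE ?eqxx ?orbT // lexE sym exy.
- by apply: (adjN (s := (x, h))); rewrite ?inE ?eqxx // lexE exy.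
- by apply: (adjN (s := (x, h))); rewrite ?inE ?eqxx // lexE e.
- by apply: (adjN (s := (y, h))); rewrite ?inE ?eqxx ?orbT // lexE sym e.
Qed.

Lemma dedgeP (T : finType) (e : rel T) :
  compl_diam_gt2 e <->
  exists x y, [/\ x != y, e x y & forall z, [|| z == x, z == y, e x z | e z y]].
Proof.
split.
- case=> x [y [xy ncxy /existsPn nz]]; exists x, y; split => //.
    by move: ncxy; rewrite /compl_rel xy /= negbK.
  move=> z; move: (nz z); rewrite /compl_rel !negb_and !negbK.
  by case/orP=> /orP[/eqP->|->]; rewrite ?eqxx ?orbT //; case/orP=> [/eqP->|->]; rewrite ?eqxx ?orbT.
- case=> x [y [xy exy H]]; exists x, y; split => //.
    by rewrite /compl_rel exy andbF.
  apply/existsPn=> z; rewrite /compl_rel !negb_and !negbK.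
  by case/or4P: (H z) => [/eqP->|/eqP->|->|->]; rewrite ?eqxx ?orbT.
Qed.

Lemma notN (T : finType) (e : rel T) (D : {set T}) c v :
  ~~ ((c \in D) || [exists v in D, e v c]) -> v \in D -> (v != c) && ~~ e v c.
Proof.
move=> nc vD; apply/andP; split; apply: contra nc => h.
- by rewrite -(eqP h) vD.
- by apply/orP; right; apply/existsP; exists v; rewrite vD h.
Qed.

Theorem mainTheorem9 (T1 T2 : finType) (e1 : rel T1) (e2 : rel T2) :
  simple_graph e1 -> connected_graph e1 -> nontrivial_graph T1 ->
  simple_graph e2 -> connected_graph e2 -> nontrivial_graph T2 ->
  (power_domination_number (lex_rel e1 e2) = 1 <->
     domination_number e1 = 1 /\ power_domination_number e2 = 1) /\
  (power_domination_number (lex_rel e1 e2) = 2 <->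
     (domination_number e1 = 2 /\ power_domination_number e2 = 1) \/
     (compl_diam_gt2 e1 /\ 1 < power_domination_number e2)).
Proof.
move=> [sym1 irr1] conn1 nt1 [sym2 irr2] conn2 nt2.
rewrite /nontrivial_graph in nt1 nt2.
case/card_gt0P: (ltnW nt1) => x0 _.
case/card_gt0P: (ltnW nt2) => y0 _.
have PT := setT_pd (lex_rel e1 e2); have P0 := set0_not_pd (lex_rel e1 e2) (x0, y0).
have HT := setT_pd e2; have H0 := set0_not_pd e2 y0.
have DT := setT_dom e1; have D0 := set0_not_dom e1 x0.
have P1 : power_domination_number (lex_rel e1 e2) = 1 <->
          exists p, power_dominating (lex_rel e1 e2) [set p] := num1 PT P0.
have P2 : power_domination_number (lex_rel e1 e2) = 2 <->
          (exists p q, p != q /\ power_dominating (lex_rel e1 e2) [set p; q]) /\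
          (forall p, ~~ power_dominating (lex_rel e1 e2) [set p]) := num2 PT P0.
have H1 : power_domination_number e2 = 1 <->
          exists h, power_dominating e2 [set h] := num1 HT H0.
have Hgt1 : 1 < power_domination_number e2 <->
          forall h, ~~ power_dominating e2 [set h] := num_gt1 HT H0.
have D1 : domination_number e1 = 1 <-> exists g, dominating e1 [set g] := num1 DT D0.
have D2 : domination_number e1 = 2 <->
          (exists a b, a != b /\ dominating e1 [set a; b]) /\
          (forall g, ~~ dominating e1 [set g]) := num2 DT D0.
split; split.
- move=> /P1 [[g h] pd].
  have [dg ph] := single_pd_inv irr1 conn2 nt2 pd.
  by split; [apply/D1; exists g | apply/H1; exists h].
- case=> [/D1 [g dg] /H1 [h ph]]; apply/P1; exists (g, h); exact: single_pd.
- move=> /P2 [[p [q [pq pdpq]]] nos].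
  case: (boolP [exists g, dominating e1 [set g]]) => [/existsP [g dg]| /existsPn nd].
  + right; split.
    * apply/dedgeP; have [y yg] := other_elt g nt1.
      have dy := eqP dg; move/setP/(_ y): dy; rewrite cnP !inE (negbTE yg) /=.
      case/existsP=> v; rewrite inE => /andP[/eqP -> egy].
      exists g, y; split => //; first by rewrite eq_sym.
      move=> z; have dz := eqP dg; move/setP/(_ z): dz; rewrite cnP !inE.
      case/orP=> [->//|/existsP[v']]; rewrite inE => /andP[/eqP -> ->].
      by rewrite !orbT.
    * apply/Hgt1 => h; apply/negP => ph.
      by move: (nos (g, h)); rewrite (single_pd irr1 dg ph).
  + have Dpq : dominating e1 [set p.1; q.1].
      apply/eqP/setP => c; rewrite in_setT cnP.
      case: (boolP ((c \in [set p.1; q.1]) || [exists v in [set p.1; q.1], e1 v c])) => // nc. exfalso; move: pdpq; apply/negP.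
      apply: (@A1 _ _ _ e2 _ c nt2) => s; rewrite !inE => /orP[/eqP->|/eqP->].
      * by apply: (notN nc); rewrite !inE eqxx.
      * by apply: (notN nc); rewrite !inE eqxx orbT.
    have ab : p.1 != q.1.
      apply/negP => /eqP e; move: (nd p.1); rewrite e.
      by move: Dpq; rewrite e setUid => ->.
    case: (boolP [exists h, power_dominating e2 [set h]]) => [/existsP[h ph]| /existsPn nh].
      left; split; last by apply/H1; exists h.
      apply/D2; split; last exact: nd.
      by exists p.1, q.1.
    right; split; last by apply/Hgt1.
    case eab: (e1 p.1 q.1).
      apply/dedgeP; exists p.1, q.1; split => // z.
      have dz := eqP Dpq; move/setP/(_ z): dz; rewrite cnP !inE.
      case/orP=> [/orP[->|->]|/existsP[v]]; rewrite ?orbT //.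
      rewrite !inE => /andP[/orP[/eqP->|/eqP->] e]; first by rewrite e !orbT.
      by rewrite (sym1 z) e !orbT.
    have := pair_layer sym1 irr1 conn2 nt2 pdpq ab (negbT eab).
    by rewrite (negbTE (nh p.2)).
- case.
  + case=> [/D2 [[a [b [ab dab]]] nd] /H1 [h ph]]; apply/P2; split.
      exists (a, h), (b, h); split; last exact: pair_pd.
      by apply: contraNneq ab => -[->].
    move=> [g h']; apply/negP => pd.
    have [dg _] := single_pd_inv irr1 conn2 nt2 pd.
    by move: (nd g); rewrite dg.
  + case=> [/dedgeP [x [y [xy exy H]]] /Hgt1 nh]; apply/P2; split.
      exists (x, y0), (y, y0); split; last exact: edge_pd.
      by apply: contraNneq xy => -[->].
    move=> [g h']; apply/negP => pd.
    have [_ ph] := single_pd_inv irr1 conn2 nt2 pd.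
    by move: (nh h'); rewrite ph.
Qed.
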